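(* Let $(M_I,\triangleright)$ be a prefactor system, $\alpha$ a consistent set in it, and $b_i\in M_i$ for some $i\in I$. The following are equivalent: (1) $b_i\in\alpha^m$; (2) $\alpha\cup\{b_i\}$ is a consistent set; (3) there are cofinally many $i'\in I$ such that $a_{i'}\triangleright b_i$ for some $a_{i'}\in\alpha\cap M_{i'}$; (4) $a_{i'}\triangleright b_i$ for all $a_{i'}\in\alpha$ with $i'\ge i$; (5) the set of $i'\in I$ such that $a_{i'}\triangleright b_i$ for some $a_{i'}\in\alpha\cap M_{i'}$ contains a member of $\mathcal F(I)$.
   Context: Let $(I,\le)$ be a non-empty directed preordered set. Fix a family $\mathcal F(I)$ of subsets of $I$ such that every member of $\mathcal F(I)$ is cofinal in $I$ (for every $i$ there is $i'\ge i$ in it), $\mathcal F(I)$ is closed under supersets and finite intersections (it is a proper filter on the cofinal subsets), and $\mathcal F(I)$ contains every non-empty upward closed subset of $I$. A system $(M_I,\triangleright)$ consists of sets $M_i$ ($i\in I$, pairwise disjoint) and relations $\triangleright\subseteq M_{i'}\times M_i$ for $i\le i'$, reflexive for $i=i'$. $a_i\approx b_j$ iff there are $i'\ge i,j$ and $c\in M_{i'}$ with $c\triangleright a_i$, $c\triangleright b_j$. A prefactor system is a system with $a_{i'}\approx a_i\iff a_{i'}\triangleright a_i$ for all $i\le i'$. A consistent set is a set $\alpha\subseteq\bigcup_{i\in I}M_i$ such that $a_{i'}\triangleright a_i$ for all $a_{i'},a_i\in\alpha$ with $a_{i'}\in M_{i'}$, $a_i\in M_i$, $i'\ge i$, and such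 that $I_\alpha:=\{i\in I\mid \alpha\cap M_i\ne\emptyset\}\in\mathcal F(I)$. A dynamic element is a consistent set that is maximal under inclusion; for every consistent set $\alpha$ in a prefactor system there is exactly one dynamic element containing $\alpha$, denoted $\alpha^m$. *)

(* Defs.v *)
From Stdlib Require Import Classical.

Section Defs.
Context {I : Type} (le : I -> I -> Prop).

Definition directed_preorder : Prop :=
  (forall i, le i i) /\
  (forall i j k, le i j -> le j k -> le i k) /\
  (exists i : I, True) /\
  (forall i j, exists k, le i k /\ le j k).

Definition cofinal (S : I -> Prop) : Prop :=
  forall i, exists i', le i i' /\ S i'.

Definition upward_closed (S : I -> Prop) : Prop :=
  forall i j, S i -> le i j -> S j.

Definition admissible_family (F : (I -> Prop) -> Prop) : Prop :=
  (forall S, F S -> cofinal S) /\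
  (forall S T, F S -> (forall i, S i -> T i) -> F T) /\
  (forall S T, F S -> F T -> F (fun i => S i /\ T i)) /\
  (forall S, (exists i, S i) -> upward_closed S -> F S).

(* A system: the disjoint union of the M_i is a type X with an index map
   idx : X -> I (so M_i = {x | idx x = i}); the relation tr a b stands for
   a |> b and is only meaningful when le (idx b) (idx a). *)
Context {X : Type} (idx : X -> I) (tr : X -> X -> Prop).

Definition system_axiom : Prop := forall a : X, tr a a.

Definition approx (a b : X) : Prop :=
  exists c, le (idx a) (idx c) /\ le (idx b) (idx c) /\ tr c a /\ tr c b.

Definition prefactor_system : Prop :=
  system_axiom /\
  (forall a b, le (idx b) (idx a) -> (approx a b <-> tr a b)).

Context (F : (I -> Prop) -> Prop).

Definition index_set (alpha : X -> Prop) : I -> Prop :=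
  fun i => exists a, alpha a /\ idx a = i.

Definition consistent (alpha : X -> Prop) : Prop :=
  (forall a b, alpha a -> alpha b -> le (idx b) (idx a) -> tr a b) /\
  F (index_set alpha).

Definition dynamic_element (D : X -> Prop) : Prop :=
  consistent D /\
  (forall E, consistent E -> (forall x, D x -> E x) -> forall x, E x -> D x).

(* D is "alpha^m": a dynamic element containing alpha (unique in a prefactor system). *)
Definition is_dyn_hull (alpha D : X -> Prop) : Prop :=
  dynamic_element D /\ (forall x, alpha x -> D x).

End Defs.

(* Main.v *)
Require Import Defs.

Theorem lemma2p9 (I : Type) (le : I -> I -> Prop) (F : (I -> Prop) -> Prop)
  (X : Type) (idx : X -> I) (tr : X -> X -> Prop)
  (HI : directed_preorder le) (HF : admissible_family le F)
  (Hpre : prefactor_system le idx tr)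
  (alpha : X -> Prop) (Halpha : consistent le idx tr F alpha) (b : X) :
  let i := idx b in
  let S := fun i' => le i i' /\ exists a, alpha a /\ idx a = i' /\ tr a b in
  ((forall D, is_dyn_hull le idx tr F alpha D -> D b) <->
     consistent le idx tr F (fun x => alpha x \/ x = b)) /\
  (consistent le idx tr F (fun x => alpha x \/ x = b) <-> cofinal le S) /\
  (cofinal le S <-> (forall a, alpha a -> le i (idx a) -> tr a b)) /\
  ((forall a, alpha a -> le i (idx a) -> tr a b) <->
     exists T, F T /\ forall i', T i' -> S i').
Proof.
  intros i S.
  destruct HI as [Hrefl [Htrans [_ Hdir]]].
  destruct HF as [Fcof [Fsup [Fint Fup]]].
  destruct Hpre as [Htrr Hpf].
  destruct Halpha as [Hac HaF].
  set (P2 := consistent le idx tr F (fun x => alpha x \/ x = b)).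
  set (P4 := forall a, alpha a -> le i (idx a) -> tr a b).
  set (P5 := exists T, F T /\ forall i', T i' -> S i').
  assert (H45 : P4 -> P5).
  { intro H4. exists (fun j => le i j /\ index_set idx alpha j). split.
    - apply Fint; [|exact HaF]. apply Fup.
      + exists i. apply Hrefl.
      + intros j k Hj Hjk. eauto.
    - intros j [Hj [a [Ha Hi]]]. split; [exact Hj|].
      exists a. subst j. split; [exact Ha|]. split; [reflexivity|]. apply H4; auto. }
  assert (H53 : P5 -> cofinal le S).
  { intros [T [HT HTS]] j. destruct (Fcof T HT j) as [k [Hk Tk]]. eauto. }
  assert (H32 : cofinal le S -> P2).
  { intro H3. split.
    - intros x y Hx Hy Hle.
      destruct Hx as [Hx|Hx]; destruct Hy as [Hy|Hy]; subst.
      + apply Hac; auto.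
      + destruct (H3 (idx x)) as [k [Hk [Hik [a' [Ha' [Hia' Ha'b]]]]]]. subst k.
        apply (proj1 (Hpf x b Hle)). exists a'. repeat split; solve [auto | apply Hac; eauto | eauto].
      + destruct (H3 (idx b)) as [k [Hk [Hik [a' [Ha' [Hia' Ha'b]]]]]]. subst k.
        apply (proj1 (Hpf b y Hle)). exists a'. repeat split; solve [auto | apply Hac; eauto | eauto].
      + apply Htrr.
    - apply (Fsup (index_set idx alpha)); [exact HaF|].
      intros j [a [Ha Hj]]. exists a. auto. }
  assert (H24 : P2 -> P4).
  { intros [Hc _] a Ha Hle. apply Hc; auto. }
  assert (H21 : P2 -> forall D, is_dyn_hull le idx tr F alpha D -> D b).
  { intros H2P D [[[HDc HDF] HDmax] HDa].
    assert (H3 : cofinal le S) by auto.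
    apply (HDmax (fun x => D x \/ x = b)).
    - split.
      + assert (Hdb : forall d, D d -> le (idx b) (idx d) \/ le (idx d) (idx b) -> approx le idx tr d b).
        { intros d Hd _. destruct (H3 (idx d)) as [k [Hk [Hik [a' [Ha' [Hia' Ha'b]]]]]].
          subst k. exists a'. repeat split; solve [auto | apply HDc; eauto | eauto]. }
        intros x y Hx Hy Hle.
        destruct Hx as [Hx|Hx]; destruct Hy as [Hy|Hy]; subst.
        * apply HDc; auto.
        * apply (proj1 (Hpf x b Hle)). apply Hdb; auto.
        * apply (proj1 (Hpf b y Hle)).
          destruct (Hdb y Hy (or_intror Hle)) as [c [? [? [? ?]]]].
          exists c; auto.
        * apply Htrr.
      + apply (Fsup (index_set idx D)); [exact HDF|].
        intros j [a [Ha Hj]]. exists a. auto.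
    - auto.
    - auto. }
  assert (H14 : (forall D, is_dyn_hull le idx tr F alpha D -> D b) -> P4).
  { intro H1.
    set (D0 := fun x => forall a, alpha a -> le (idx x) (idx a) -> tr a x).
    apply (H1 D0). split; [split|].
    - split.
      + intros x y Hx Hy Hle.
        destruct (Fcof _ HaF (idx x)) as [k [Hk [a [Ha Hia]]]]. subst k.
        apply (proj1 (Hpf x y Hle)). exists a. repeat split; eauto.
      + apply (Fsup (index_set idx alpha)); [exact HaF|].
        intros j [a [Ha Hj]]. exists a. split; auto.
        intros a' Ha' Hle. apply Hac; auto.
    - intros E [HEc _] HDE x Ex a Ha Hle. apply HEc; auto.
      apply HDE. intros a' Ha' Hle'. apply Hac; auto.
    - intros x Hx a Ha Hle. apply Hac; auto. }
  split; [|split; [|split]]; split; auto.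
Qed.
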